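(* Assume the setting below, and assume additionally that there is a constant $\Lambda\ge0$ with $\overline{L}^{(m)}_n\le\Lambda$ for all $m\ge m_0$, all $n\ge0$ and all initial values $x_0\in D$. Then for every $p\in\mathbb{Z}$ there exist constants $C_1,C_2\ge0$ (depending only on $D$, $K$, $m_0$, $\Lambda$ and $p$) such that $m_{min}(x_0,N,p)$ is finite and $$m_{min}(x_0,N,p)\le C_1N+C_2$$ for all $N\in\mathbb{N}$ and all $x_0\in D$.
   Context: Setting. $D\subset\mathbb{R}$ is a compact interval with $0\notin D$, and $f:D\to D$ is continuous on $D$, continuously differentiable on $\operatorname{int}D$, with $f'$ bounded on $\operatorname{int}D$. Fix $K>0$ and an integer $m_0\ge1$ with $K2^{-m_0}<1$, and put $\delta_m:=\frac{K2^{-m}}{1-K2^{-m}}$ for integers $m\ge m_0$. For an initial value $x_0\in D$ let $x_n:=f^n(x_0)$. For each integer $m\ge m_0$ (the mantissa length) a computed orbit is given: sequences $(\hat{x}^{(m)}_n)_{n\ge0}\subset D$, $(\overline{e}^{(m)}_n)_{n\ge0}$ and numbers $\overline{L}^{(m)}_n\ge0$ with $\overline{e}^{(m)}_0=\delta_m|\hat{x}^{(m)}_0|$ and $\overline{e}^{(m)}_{n+1}=\overline{L}^{(m)}_n\overline{e}^{(m)}_n+\delta_m|\hat{x}^{(m)}_{n+1}|$. For $N\in\mathbb{N}$ and $p\in\mathbb{Z}$, the minimal mantissa length $m_{min}(x_0,N,p)$ is the least integer $m\ge m_0$ such that $\overline{e}^{(m)}_n\le\frac{10^{-p}}{1+10^{-p}}|\hat{x}^{(m)}_n|$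 for all $n=0,\dots,N$. The loss of significance rate is $\sigma(x_0,p):=\limsup_{N\to\infty}m_{min}(x_0,N,p)/N$. *)

(* Defs.v *)
From Stdlib Require Import Reals Lra Lia.
Open Scope R_scope.

Definition inD (a b x : R) : Prop := a <= x <= b.

Definition delta (K : R) (m : nat) : R :=
  K * (/ 2) ^ m / (1 - K * (/ 2) ^ m).

Definition setting_f (a b : R) (f : R -> R) : Prop :=
  a <= b /\ ~ (a <= 0 <= b) /\
  (forall x, inD a b x -> inD a b (f x)) /\
  (forall x, inD a b x -> forall eps, 0 < eps -> exists del, 0 < del /\
      forall y, inD a b y -> Rabs (y - x) < del -> Rabs (f y - f x) < eps) /\
  (exists f' : R -> R,
      (forall x, a < x < b -> derivable_pt_lim f x (f' x) /\ continuity_pt f' x) /\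
      (exists B, forall x, a < x < b -> Rabs (f' x) <= B)).

(* Computed orbits: xh m x0 n = \hat x^{(m)}_n for initial value x0,
   e m x0 n = \overline e^{(m)}_n, L m x0 n = \overline L^{(m)}_n. *)
Definition computed_orbits (a b K : R) (m0 : nat)
    (xh e L : nat -> R -> nat -> R) : Prop :=
  forall m x0, (m0 <= m)%nat -> inD a b x0 ->
    (forall n, inD a b (xh m x0 n)) /\
    (forall n, 0 <= L m x0 n) /\
    e m x0 0%nat = delta K m * Rabs (xh m x0 0%nat) /\
    (forall n, e m x0 (S n) = L m x0 n * e m x0 n + delta K m * Rabs (xh m x0 (S n))).

Definition accurate (xh e : nat -> R -> nat -> R) (x0 : R) (N : nat) (p : Z) (m : nat)
  : Prop :=
  forall n, (n <= N)%nat ->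
    e m x0 n <= powerRZ 10 (- p) / (1 + powerRZ 10 (- p)) * Rabs (xh m x0 n).

Definition is_m_min (m0 : nat) (xh e : nat -> R -> nat -> R) (x0 : R) (N : nat) (p : Z)
    (mm : nat) : Prop :=
  (m0 <= mm)%nat /\ accurate xh e x0 N p mm /\
  (forall m, (m0 <= m)%nat -> accurate xh e x0 N p m -> (mm <= m)%nat).

(* Main.v *)
Require Import Defs.
From Stdlib Require Import Reals Lra Lia Classical.
Open Scope R_scope.

Lemma INR_le_pow2 : forall n, INR n + 1 <= 2 ^ n.
Proof.
  induction n as [|n IH]; [simpl; lra|]. rewrite S_INR; simpl.
  assert (1 <= 2 ^ n) by (apply pow_R1_Rle; lra). lra.
Qed.

Lemma least_ex : forall (P : nat -> Prop) n, P n ->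
  exists m, P m /\ forall k, P k -> (m <= k)%nat.
Proof.
  intros P n; induction n as [n IH] using (well_founded_induction Wf_nat.lt_wf).
  intros Hn. destruct (classic (exists k, (k < n)%nat /\ P k)) as [[k [Hk Pk]]|H].
  - exact (IH k Hk Pk).
  - exists n; split; auto. intros k Pk. destruct (Compare_dec.le_lt_dec n k); auto.
    exfalso; apply H; eauto.
Qed.

Lemma half_pow_small : forall eps, 0 < eps -> exists j, (/2) ^ j <= eps.
Proof.
  intros eps He. destruct (archimed (/ eps)) as [H1 _].
  assert (0 <= IZR (up (/eps))). { assert (0 < /eps) by (apply Rinv_0_lt_compat; lra). lra. }
  exists (Z.to_nat (up (/eps))).
  assert (HH := INR_le_pow2 (Z.to_nat (up (/eps)))).
  rewrite INR_IZR_INZ, Znat.Z2Nat.id in HH by (apply le_IZR; lra).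
  assert (0 < /eps) by (apply Rinv_0_lt_compat; lra).
  replace ((/ 2) ^ Z.to_nat (up (/eps))) with (/ (2 ^ Z.to_nat (up (/eps)))) by (rewrite pow_inv; auto).
  rewrite <- (Rinv_inv eps) at 2. apply Rinv_le_contravar; lra.
Qed.

Lemma e_bound : forall (e L xh : nat -> R) d M Lp,
  0 <= d -> 0 <= M -> 1 <= Lp ->
  (forall n, Rabs (xh n) <= M) -> (forall n, 0 <= L n <= Lp) ->
  e 0%nat = d * Rabs (xh 0%nat) ->
  (forall n, e (S n) = L n * e n + d * Rabs (xh (S n))) ->
  forall n, e n <= d * M * (INR n + 1) * Lp ^ n.
Proof.
  intros e L xh d M Lp Hd HM HL Hx HLn H0 HS n.
  induction n as [|n IH].
  - rewrite H0; simpl. specialize (Hx 0%nat).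
    assert (d * Rabs (xh 0%nat) <= d * M) by (apply Rmult_le_compat_l; auto). lra.
  - rewrite HS, S_INR. simpl.
    assert (Hp : 1 <= Lp ^ n) by (apply pow_R1_Rle; lra).
    assert (B0 : 0 <= d * M * (INR n + 1) * Lp ^ n).
    { apply Rmult_le_pos; [|lra]. apply Rmult_le_pos; [apply Rmult_le_pos; auto|].
      pose proof (pos_INR n); lra. }
    destruct (HLn n) as [HL0 HL1].
    assert (L n * e n <= L n * (d * M * (INR n + 1) * Lp ^ n)) by (apply Rmult_le_compat_l; auto).
    assert (L n * (d * M * (INR n + 1) * Lp ^ n) <= Lp * (d * M * (INR n + 1) * Lp ^ n))
      by (apply Rmult_le_compat_r; auto).
    assert (d * Rabs (xh (S n)) <= d * M) by (apply Rmult_le_compat_l; auto).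
    assert (d * M <= d * M * (Lp * Lp ^ n)).
    { assert (0 <= d * M) by (apply Rmult_le_pos; auto).
      assert (1 <= Lp * Lp ^ n) by (change (1 <= Lp ^ (S n)); apply pow_R1_Rle; lra).
      rewrite <- (Rmult_1_r (d*M)) at 1. apply Rmult_le_compat_l; auto. }
    nra.
Qed.

Lemma half_pow_le1 : forall n, 0 < (/2)^n <= 1.
Proof. intros n. split; [apply pow_lt; lra|].
  rewrite <- (pow1 n). apply pow_incr; lra. Qed.

Theorem mainTheorem5 :
  forall (a b K : R) (m0 : nat) (Lam : R) (p : Z),
    a <= b -> ~ (a <= 0 <= b) ->
    0 < K -> (1 <= m0)%nat -> K * (/ 2) ^ m0 < 1 -> 0 <= Lam ->
    exists C1 C2 : R, 0 <= C1 /\ 0 <= C2 /\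
      forall (f : R -> R) (xh e L : nat -> R -> nat -> R),
        setting_f a b f ->
        computed_orbits a b K m0 xh e L ->
        (forall m x0 n, (m0 <= m)%nat -> inD a b x0 -> L m x0 n <= Lam) ->
        forall (x0 : R) (N : nat), inD a b x0 ->
          exists mm : nat, is_m_min m0 xh e x0 N p mm /\
            INR mm <= C1 * INR N + C2.
Proof.
  intros a b K m0 Lam p Hab H0 HK Hm0 HKm0 HLam.
  set (Lp := Rmax 1 Lam).
  assert (HLp1 : 1 <= Lp) by apply Rmax_l.
  assert (HLp2 : Lam <= Lp) by apply Rmax_r.
  set (c := Rmin (Rabs a) (Rabs b)). set (M := Rmax (Rabs a) (Rabs b)).
  assert (Hc : 0 < c /\ forall x, inD a b x -> c <= Rabs x <= M).
  { unfold c, M, inD. destruct (Rlt_or_le 0 a) as [Ha|Ha].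
    - rewrite (Rabs_right a), (Rabs_right b) by lra.
      rewrite Rmin_left, Rmax_right by lra. split; [lra|].
      intros x Hx. rewrite Rabs_right by lra. lra.
    - assert (b < 0) by (destruct (Rlt_or_le b 0); [auto|exfalso; apply H0; lra]).
      rewrite (Rabs_left a), (Rabs_left b) by lra.
      rewrite Rmin_right, Rmax_left by lra. split; [lra|].
      intros x Hx. rewrite Rabs_left by lra. lra. }
  destruct Hc as [Hc0 HcM].
  assert (HM0 : 0 < M). { assert (Hb : inD a b b) by (unfold inD; lra).
    specialize (HcM b Hb). lra. }
  set (tol := powerRZ 10 (- p) / (1 + powerRZ 10 (- p))).
  assert (Htol : 0 < tol).
  { unfold tol. assert (0 < powerRZ 10 (-p)) by (apply powerRZ_lt; lra).
    apply Rdiv_lt_0_compat; lra. }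
  destruct (half_pow_small (/ (2 * Lp))) as [k Hk].
  { apply Rinv_0_lt_compat; lra. }
  set (eps1 := Rmin (/2) (tol * c / (2 * M))).
  assert (Heps1 : 0 < eps1).
  { unfold eps1. apply Rmin_glb_lt; [lra|]. apply Rdiv_lt_0_compat; [|lra].
    apply Rmult_lt_0_compat; lra. }
  destruct (half_pow_small (eps1 / K)) as [j1 Hj1].
  { apply Rdiv_lt_0_compat; lra. }
  set (m1 := (m0 + j1)%nat).
  set (t1 := K * (/2) ^ m1).
  assert (Ht1 : 0 < t1 <= eps1).
  { unfold t1, m1. rewrite pow_add. split.
    - apply Rmult_lt_0_compat; [lra|]. apply Rmult_lt_0_compat; apply pow_lt; lra.
    - destruct (half_pow_le1 m0). destruct (half_pow_le1 j1).
      assert (K * (/2)^j1 <= eps1).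
      { replace eps1 with (K * (eps1 / K)) by (field; lra).
        apply Rmult_le_compat_l; lra. }
      nra. }
  assert (Ht1b : t1 <= /2 /\ 2 * t1 * M <= tol * c).
  { unfold eps1 in Ht1. split.
    - pose proof (Rmin_l (/2) (tol * c / (2 * M))). lra.
    - pose proof (Rmin_r (/2) (tol * c / (2 * M))).
      assert (t1 <= tol * c / (2 * M)) by lra.
      apply (Rmult_le_compat_r (2 * M)) in H1; [|lra].
      replace (tol * c / (2 * M) * (2 * M)) with (tol * c) in H1 by (field; lra). lra. }
  exists (INR k), (INR m1). split; [apply pos_INR|]. split; [apply pos_INR|].
  intros f xh e L Hf Horb HLb x0 N Hx0.
  set (ms := (m1 + k * N)%nat).
  assert (Hms : (m0 <= ms)%nat) by (unfold ms, m1; lia).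
  set (t := K * (/2) ^ ms).
  assert (Htt : t = t1 * ((/2)^k)^N).
  { unfold t, t1, ms. rewrite pow_add, pow_mult. ring. }
  assert (HQ : ((/2)^k)^N * ((INR N + 1) * Lp ^ N) <= 1).
  { assert (H1 : ((/2)^k)^N * Lp^N <= (/2)^N).
    { rewrite <- Rpow_mult_distr. apply pow_incr. destruct (half_pow_le1 k).
      split; [nra|]. apply (Rmult_le_compat_r Lp) in Hk; [|lra].
      replace (/ (2 * Lp) * Lp) with (/2) in Hk by (field; lra). lra. }
    assert (H2 : (INR N + 1) * (/2)^N <= 1).
    { rewrite pow_inv. pose proof (INR_le_pow2 N).
      assert (0 < 2 ^ N) by (apply pow_lt; lra).
      apply (Rmult_le_reg_r (2^N)); auto. rewrite Rmult_assoc, Rinv_l by lra. lra. }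
    pose proof (pos_INR N). nra. }
  assert (Ht : 0 < t <= t1).
  { rewrite Htt. destruct (half_pow_le1 k) as [Ha Hb].
    assert (0 < ((/2)^k)^N) by (apply pow_lt; lra).
    assert (((/2)^k)^N <= 1) by (rewrite <- (pow1 N); apply pow_incr; lra). nra. }
  set (d := delta K ms).
  assert (Hd : 0 <= d /\ d <= 2 * t).
  { assert (Hdeq : d * (1 - t) = t) by (unfold d, delta; fold t; field; lra).
    assert (0 <= d). { unfold d, delta; fold t. unfold Rdiv. apply Rmult_le_pos; [lra|].
      apply Rlt_le, Rinv_0_lt_compat; lra. }
    nra. }
  destruct (Horb ms x0 Hms Hx0) as [Hxh [HL0 [He0 HeS]]].
  assert (HE := e_bound (e ms x0) (L ms x0) (xh ms x0) d M Lp (proj1 Hd) (Rlt_le _ _ HM0) HLp1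
    (fun n => proj2 (HcM _ (Hxh n))) (fun n => conj (HL0 n) (Rle_trans _ _ _ (HLb ms x0 n Hms Hx0) HLp2))
    He0 HeS).
  assert (Hacc : accurate xh e x0 N p ms).
  { intros n Hn. fold tol. specialize (HE n).
    assert (Hmono : (INR n + 1) * Lp ^ n <= (INR N + 1) * Lp ^ N).
    { apply Rmult_le_compat; [pose proof (pos_INR n); lra | apply pow_le; lra | |].
      - apply le_INR in Hn; lra.
      - apply Rle_pow; auto. }
    assert (0 <= (INR n + 1) * Lp ^ n) by (apply Rmult_le_pos; [pose proof (pos_INR n); lra|apply pow_le; lra]).
    assert (HdM : 0 <= d * M) by (apply Rmult_le_pos; lra).
    assert (e ms x0 n <= d * M * ((INR N + 1) * Lp ^ N)).
    { eapply Rle_trans; [exact HE|]. rewrite Rmult_assoc. apply Rmult_le_compat_l; auto. }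
    assert (d * M * ((INR N + 1) * Lp ^ N) <= 2 * t1 * M * (((/2)^k)^N * ((INR N + 1) * Lp ^ N))).
    { assert (0 <= (INR N + 1) * Lp ^ N) by lra.
      replace (2 * t1 * M * (((/2)^k)^N * ((INR N + 1) * Lp ^ N)))
        with ((2 * t) * M * ((INR N + 1) * Lp ^ N)) by (rewrite Htt; ring).
      apply Rmult_le_compat_r; auto. apply Rmult_le_compat_r; lra. }
    assert (2 * t1 * M * (((/2)^k)^N * ((INR N + 1) * Lp ^ N)) <= 2 * t1 * M).
    { assert (0 <= ((/2)^k)^N * ((INR N + 1) * Lp ^ N)).
      { apply Rmult_le_pos; [apply pow_le, pow_le; lra|lra]. }
      assert (0 <= 2 * t1 * M) by (apply Rmult_le_pos; lra). nra. }
    assert (tol * c <= tol * Rabs (xh ms x0 n)).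
    { apply Rmult_le_compat_l; [lra|]. apply (HcM _ (Hxh n)). }
    lra. }
  destruct (least_ex (fun m => (m0 <= m)%nat /\ accurate xh e x0 N p m) ms (conj Hms Hacc))
    as [mm [[Hmm1 Hmm2] Hmm3]].
  exists mm. split.
  - split; [auto|]. split; [auto|]. intros m Hm Ha. apply Hmm3; auto.
  - assert (Hle : (mm <= ms)%nat) by (apply Hmm3; auto).
    apply le_INR in Hle. unfold ms in Hle. rewrite plus_INR, mult_INR in Hle. lra.
Qed.
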